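(* Let $\theta\in\mathbb{R}$ and let $g\in L^2(\mathbb{R}^3)$ be even or odd. Then for all $(u,\alpha)\in L^2\oplus L^2$, $$\mathbf{D}_g(\theta)(u,\alpha)=\big(u(x)e^{-i\theta A_g(x)},\ \alpha(k)-i\theta g(k)F(|u|^2)(k)\big).$$
   Context: For $g\in L^2$, $\mathbf{D}_g(\theta)(u,\alpha)=(u_\theta,\alpha_\theta)$ with $u_\theta(x)=u(x)\exp\{-i\theta A_g(x)+i\theta^2\mathrm{Im}\int F(|u|^2)(k)|g(k)|^2e^{ik\cdot x}dk\}$ and $\alpha_\theta(k)=\alpha(k)-i\theta g(k)F(|u|^2)(k)$, where $A_g(x)=\int(g(k)\bar\alpha(k)e^{-ik\cdot x}+\bar g(k)\alpha(k)e^{ik\cdot x})dk$ and $F(|u|^2)(k)=\int e^{-ik\cdot x}|u(x)|^2dx$. *)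

(* Defs.v *)
From HB Require Import structures.
From mathcomp Require Import all_boot all_order all_algebra.
From mathcomp Require Import all_classical all_reals all_analysis.
From mathcomp Require Import complex.
Set Implicit Arguments. Unset Strict Implicit. Unset Printing Implicit Defensive.
Import Order.TTheory GRing.Theory Num.Theory.
Import numFieldNormedType.Exports.
Local Open Scope classical_set_scope.
Local Open Scope ring_scope.
Local Open Scope complex_scope.

Definition R3 (R : realType) := ((R * R) * R)%type.

Definition leb3 (R : realType) :=
  ((@lebesgue_measure R \x @lebesgue_measure R) \x @lebesgue_measure R)%E.

Definition dot3 (R : realType) (k x : R3 R) : R :=
  k.1.1 * x.1.1 + k.1.2 * x.1.2 + k.2 * x.2.

Definition neg3 (R : realType) (k : R3 R) : R3 R := ((- k.1.1, - k.1.2), - k.2).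

Definition cexp (R : realType) (z : R[i]) : R[i] :=
  ((expR (complex.Re z) * cos (complex.Im z)) +i* (expR (complex.Re z) * sin (complex.Im z)))%C.

Definition cint (R : realType) (f : R3 R -> R[i]) : R[i] :=
  ((Rintegral (@leb3 R) setT (fun k => complex.Re (f k)))
    +i* (Rintegral (@leb3 R) setT (fun k => complex.Im (f k))))%C.

Definition cabs2 (R : realType) (z : R[i]) : R := complex.Re z ^+ 2 + complex.Im z ^+ 2.

Definition L2 (R : realType) (f : R3 R -> R[i]) : Prop :=
  measurable_fun setT (fun x => complex.Re (f x)) /\
  measurable_fun setT (fun x => complex.Im (f x)) /\
  (\int[@leb3 R]_x (cabs2 (f x))%:E < +oo)%E.

Definition even_fun (R : realType) (g : R3 R -> R[i]) := forall k, g (neg3 k) = g k.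
Definition odd_fun (R : realType) (g : R3 R -> R[i]) := forall k, g (neg3 k) = - g k.

Definition Fmod2 (R : realType) (u : R3 R -> R[i]) (k : R3 R) : R[i] :=
  cint (fun x => cexp (- ('i * (dot3 k x)%:C))%C * (cabs2 (u x))%:C).

Definition A_g (R : realType) (g alpha : R3 R -> R[i]) (x : R3 R) : R[i] :=
  cint (fun k => g k * (alpha k)^* * cexp (- ('i * (dot3 k x)%:C))%C
               + (g k)^* * alpha k * cexp ('i * (dot3 k x)%:C)%C).

Definition D_g (R : realType) (g : R3 R -> R[i]) (theta : R)
  (ua : (R3 R -> R[i]) * (R3 R -> R[i])) : (R3 R -> R[i]) * (R3 R -> R[i]) :=
  let u := ua.1 in let alpha := ua.2 in
  (fun x => u x * cexp (- ('i * theta%:C * A_g g alpha x)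
       + 'i * (theta ^+ 2)%:C *
         (complex.Im (cint (fun k => Fmod2 u k * (cabs2 (g k))%:C
                             * cexp ('i * (dot3 k x)%:C))))%:C)%C,
   fun k => alpha k - 'i * theta%:C * g k * Fmod2 u k)%C.

(* Main.v *)
Require Import Defs.
From HB Require Import structures.
From mathcomp Require Import all_boot all_order all_algebra.
From mathcomp Require Import all_classical all_reals all_analysis.
From mathcomp Require Import measurable_realfun.
From mathcomp Require Import complex ring lra.
Set Implicit Arguments. Unset Strict Implicit. Unset Printing Implicit Defensive.
Import Order.TTheory GRing.Theory Num.Theory.
Import numFieldNormedType.Exports.
Local Open Scope classical_set_scope.
Local Open Scope ring_scope.
Section inv_int.
Local Open Scope ereal_scope.
Context d (T : measurableType d) (R : realType).
Variable mu : {measure set T -> \bar R}.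
Variable phi : T -> T.
Hypothesis mphi : measurable_fun setT phi.
Hypothesis phiK : forall x, phi (phi x) = x.
Hypothesis inv : forall A, measurable A -> mu (phi @^-1` A) = mu A.

Import HBNNSimple.

Let sub (G : T -> \bar R) :
  [set sintegral mu h | h in [set h : {nnsfun T >-> R} | forall x, (h x)%:E <= G x]]
  `<=` [set sintegral mu h | h in [set h : {nnsfun T >-> R} | forall x, (h x)%:E <= G (phi x)]].
Proof.
move=> _ [h hG <-].
have mh : measurable_fun setT (h \o phi) by apply: measurableT_comp.
have fh : finite_set (range (h \o phi)).
  apply: (sub_finite_set _ (@fimfunP _ _ h)).
  by move=> _ [x _ <-]; exists (phi x).
have nh : forall x, (0 <= (h \o phi) x)%R by move=> x; exact: fun_ge0.
pose h' : {nnsfun T >-> R} := HB.pack (h \o phi)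
  (isMeasurableFun.Build _ _ _ _ _ mh) (FiniteImage.Build _ _ _ fh)
  (isNonNegFun.Build _ _ _ nh).
exists h'; first by move=> x /=; exact: hG.
rewrite /sintegral; apply: eq_fsbigr => r _; congr (_ * _).
have mA : measurable (h @^-1` [set r]).
  by rewrite -[X in measurable X]setTI; apply: (measurable_funP h).
by rewrite -(inv mA).
Qed.

Lemma nnint_inv (F : T -> \bar R) :
  ereal_sup [set sintegral mu h | h in [set h : {nnsfun T >-> R} | forall x, (h x)%:E <= F (phi x)]]
  = ereal_sup [set sintegral mu h | h in [set h : {nnsfun T >-> R} | forall x, (h x)%:E <= F x]].
Proof.
apply/eqP; rewrite eq_le; apply/andP; split; apply: le_ereal_sup.
- move=> y /(sub (G:=F \o phi)) [h hh <-]; exists h => // x.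
  by rewrite -[x in F x]phiK; exact: hh.
- exact: (sub (G:=F)).
Qed.

Lemma integral_inv (f : T -> \bar R) :
  \int[mu]_(x in setT) f (phi x) = \int[mu]_(x in setT) f x.
Proof.
rewrite /integral !patch_setT.
congr (_ - _).
- rewrite -(nnint_inv (f^\+)).
  congr ereal_sup; apply/funext => y; apply/propext.
  by split => -[h hh <-]; exists h => // x; move: (hh x); rewrite !funeposE.
- rewrite -(nnint_inv (f^\-)).
  congr ereal_sup; apply/funext => y; apply/propext.
  by split => -[h hh <-]; exists h => // x; move: (hh x); rewrite !funenegE.
Qed.
End inv_int.
Section pfm.
Local Open Scope ereal_scope.
Context d d' (T1 : measurableType d) (T2 : measurableType d') (R : realType).
Variables (m : {measure set T1 -> \bar R}) (f : T1 -> T2).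
Hypothesis mf : measurable_fun [set: T1] f.

Definition mypf (A : set T2) : \bar R := (m : set T1 -> \bar R) (f @^-1` A).
Let pf0 : mypf set0 = 0.
Proof. by rewrite /mypf preimage_set0 measure0. Qed.

Let pf_ge0 A : 0 <= mypf A.
Proof. exact: measure_ge0. Qed.

Let pf_sa : semi_sigma_additive mypf.
Proof.
move=> F mF tF mUF; rewrite /mypf preimage_bigcup.
apply: measure_semi_sigma_additive.
- by move=> n; rewrite -[X in measurable X]setTI; exact: mf.
- apply/trivIsetP => /= i j _ _ ij; rewrite -preimage_setI.
  by move/trivIsetP : tF => /(_ _ _ _ _ ij) ->//; rewrite preimage_set0.
- by rewrite -preimage_bigcup -[X in measurable X]setTI; exact: mf.
Qed.

Definition pfm : {measure set T2 -> \bar R} :=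
  HB.pack mypf (isMeasure.Build _ _ _ mypf pf0 pf_ge0 pf_sa).

Lemma pfmE A : pfm A = m (f @^-1` A). Proof. by []. Qed.
End pfm.


Section prodinv.
Local Open Scope ereal_scope.
Context d1 d2 (T1 : measurableType d1) (T2 : measurableType d2) (R : realType).
Variables (m1 : {sigma_finite_measure set T1 -> \bar R})
  (m2 : {sigma_finite_measure set T2 -> \bar R}).
Variables (p1 : T1 -> T1) (p2 : T2 -> T2).
Hypotheses (mp1 : measurable_fun setT p1) (mp2 : measurable_fun setT p2).
Hypotheses (inv1 : forall A, measurable A -> m1 (p1 @^-1` A) = m1 A)
  (inv2 : forall A, measurable A -> m2 (p2 @^-1` A) = m2 A).

Let p (x : T1 * T2) := (p1 x.1, p2 x.2).
Lemma mprodmap : measurable_fun setT (fun x : T1 * T2 => (p1 x.1, p2 x.2)).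
Proof.
apply: measurable_fun_pair.
- exact: measurableT_comp.
- exact: measurableT_comp.
Qed.

Lemma prod_inv A : measurable A ->
  (m1 \x m2) ((fun x : T1 * T2 => (p1 x.1, p2 x.2)) @^-1` A) = (m1 \x m2) A.
Proof.
move=> mA.
rewrite -(pfmE (m1 \x m2) mprodmap); symmetry.
apply: product_measure_unique => // B C mB mC.
rewrite pfmE.
have -> : (fun x : T1 * T2 => (p1 x.1, p2 x.2)) @^-1` (B `*` C) = (p1 @^-1` B) `*` (p2 @^-1` C) by [].
have mB' : measurable (p1 @^-1` B).
  by rewrite -[X in measurable X]setTI; apply: mp1.
have mC' : measurable (p2 @^-1` C).
  by rewrite -[X in measurable X]setTI; apply: mp2.
rewrite -inv1 // -inv2 //; exact: product_measure1E.
Qed.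
End prodinv.

Section sfprod.
Local Open Scope ereal_scope.
Context d1 d2 (T1 : measurableType d1) (T2 : measurableType d2) (R : realType).
Variable m1 : {sigma_finite_measure set T1 -> \bar R}.
Variable m2 : {sigma_finite_measure set T2 -> \bar R}.

Lemma psf : sigma_finite setT (m1 \x m2).
Proof.
have /sigma_finiteP[F [TF ndF Foo]] := sigma_finiteT m1.
have /sigma_finiteP[G [TG ndG Goo]] := sigma_finiteT m2.
exists (fun n => F n `*` G n).
 rewrite -setXTT TF TG predeqE => -[x y]; split.
    move=> [/= [n _ Fnx] [k _ Gky]]; exists (maxn n k) => //; split.
    - by move: x Fnx; exact/subsetPset/ndF/leq_maxl.
    - by move: y Gky; exact/subsetPset/ndG/leq_maxr.
  by move=> [n _ []/= ? ?]; split; exists n.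
move=> k; have [? ?] := Foo k; have [? ?] := Goo k.
split; first exact: measurableX.
by rewrite product_measure1E// lte_mul_pinfty// ge0_fin_numE.
Qed.

Definition sfprod : {sigma_finite_measure set (T1 * T2)%type -> \bar R} :=
  HB.pack (m1 \x m2) (Measure_isSigmaFinite.Build _ _ _ (m1 \x m2) psf).
End sfprod.

Section leb3.
Variable R : realType.

Lemma mN : measurable_fun [set: measurableTypeR R] (-%R : measurableTypeR R -> measurableTypeR R).
Proof. exact: oppr_measurable. Qed.

Lemma invN (A : set (measurableTypeR R)) : measurable A ->
  (@lebesgue_measure R) (-%R @^-1` A) = lebesgue_measure A.
Proof. move=> mA; exact: (lebesgue_measureN mA). Qed.

Lemma inv2 (A : set (measurableTypeR R * measurableTypeR R)) : measurable A ->
  (@lebesgue_measure R \x @lebesgue_measure R)%E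
    ((fun x : measurableTypeR R * measurableTypeR R => (- x.1, - x.2)) @^-1` A)
  = (@lebesgue_measure R \x @lebesgue_measure R)%E A.
Proof. exact: (prod_inv mN mN invN invN). Qed.

Lemma mN2 : measurable_fun setT (fun x : measurableTypeR R * measurableTypeR R => (- x.1, - x.2)).
Proof. exact: (mprodmap mN mN). Qed.

Lemma mneg3 : measurable_fun setT (fun x : (measurableTypeR R * measurableTypeR R) * measurableTypeR R => neg3 x).
Proof. exact: (mprodmap mN2 mN). Qed.

Lemma inv3 (A : set ((measurableTypeR R * measurableTypeR R) * measurableTypeR R)) :
  measurable A -> (@leb3 R) (@neg3 R @^-1` A) = leb3 A.
Proof. move=> mA. have := (@prod_inv _ _ _ _ R (sfprod (@lebesgue_measure R) (@lebesgue_measure R)) (@lebesgue_measure R) _ _ mN2 mN inv2 invN A mA). exact. Qed.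

Lemma Rint_neg3 (f : R3 R -> R) :
  Rintegral (@leb3 R) setT (fun k => f (neg3 k)) = Rintegral (@leb3 R) setT f.
Proof.
rewrite /Rintegral; congr fine.
apply: (integral_inv mneg3 _ inv3 (fun k => (f k)%:E)).
by case=> [[a b] c]; rewrite /neg3 /= !opprK.
Qed.
End leb3.

Local Open Scope complex_scope.
Section alg.
Variable R : realType.

Lemma cexpI (t : R) : cexp ('i * t%:C) = (cos t +i* sin t).
Proof.
by rewrite /cexp /= !mul0r !mulr0 !mul1r subr0 add0r expR0 !mul1r.
Qed.

Lemma cexpNI (t : R) : cexp (- ('i * t%:C)) = (cos t +i* - sin t).
Proof.
rewrite /cexp /= !mul0r !mulr0 !mul1r subr0 add0r oppr0 expR0 !mul1r.
by rewrite cosN sinN.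
Qed.

Lemma dot3N (k x : R3 R) : dot3 (neg3 k) x = - dot3 k x.
Proof. rewrite /dot3 /neg3 /=; ring. Qed.

Lemma mulcE (a b c e : R) : (a +i* b) * (c +i* e) = (a*c - b*e) +i* (a*e + b*c).
Proof. by []. Qed.

Lemma realcE (a : R) : a%:C = a +i* 0.
Proof. by []. Qed.

Lemma conjcE (a b : R) : (a +i* b)^* = a +i* (- b).
Proof. by []. Qed.

Lemma Fint_conj (t r : R) :
  cexp (- ('i * (- t)%:C)) * r%:C = (cexp (- ('i * t%:C)) * r%:C)^*.
Proof.
rewrite !cexpNI cosN sinN opprK realcE !mulcE conjcE.
congr (_ +i* _); ring.
Qed.

Lemma H_conj (a : R[i]) (c t : R) :
  a^* * c%:C * cexp ('i * (- t)%:C) = (a * c%:C * cexp ('i * t%:C))^*.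
Proof.
case: a => a b.
rewrite !cexpI cosN sinN realcE /conjc !mulcE.
congr (_ +i* _); ring.
Qed.

Lemma cabs2N (z : R[i]) : cabs2 (- z) = cabs2 z.
Proof. by case: z => a b; rewrite /cabs2 /= !sqrrN. Qed.

Lemma fine_oppB (x y : \bar R) : fine (x - y)%E = - fine (y - x)%E.
Proof.
by case: x => [x||]; case: y => [y||] //=; rewrite ?opprB ?oppr0.
Qed.


Lemma RintN (f : R3 R -> R) :
  Rintegral (@leb3 R) setT (fun k => - f k) = - Rintegral (@leb3 R) setT f.
Proof.
have E1 : ((fun x => (- f x)%:E)^\+ = (fun x => (f x)%:E)^\-)%E.
  by apply/funext => x; rewrite funeposE funenegE EFinN.
have E2 : ((fun x => (- f x)%:E)^\- = (fun x => (f x)%:E)^\+)%E.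
  by apply/funext => x; rewrite funeposE funenegE EFinN oppeK.
rewrite /Rintegral /integral !patch_setT fine_oppB.
by rewrite E1 E2.
Qed.

Lemma cint_conj (f : R3 R -> R[i]) : cint (fun k => (f k)^*) = (cint f)^*.
Proof.
rewrite /cint /conjc.
have -> : (fun k => complex.Re (let: a +i* b := f k in a -i* b)) = (fun k => complex.Re (f k)).
  by apply/funext => k; case: (f k).
have -> : (fun k => complex.Im (let: a +i* b := f k in a -i* b)) = (fun k => - complex.Im (f k)).
  by apply/funext => k; case: (f k).
by rewrite RintN.
Qed.

Lemma cint_neg3 (f : R3 R -> R[i]) : cint (fun k => f (neg3 k)) = cint f.
Proof.
rewrite /cint; congr (_ +i* _).
- exact: (Rint_neg3 (fun k => complex.Re (f k))).
- exact: (Rint_neg3 (fun k => complex.Im (f k))).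
Qed.

Lemma Fmod2N (u : R3 R -> R[i]) k : Fmod2 u (neg3 k) = (Fmod2 u k)^*.
Proof.
rewrite /Fmod2 -cint_conj; congr cint; apply/funext => x.
by rewrite dot3N Fint_conj.
Qed.

Lemma Im_conj0 (z : R[i]) : z = z^* -> complex.Im z = 0.
Proof. case: z => a b /= [] h; lra. Qed.
End alg.

Theorem lemma8 (R : realType) (theta : R) (g : R3 R -> R[i])
  (hg : L2 g) (hpar : even_fun g \/ odd_fun g)
  (u alpha : R3 R -> R[i]) (hu : L2 u) (halpha : L2 alpha) :
  D_g g theta (u, alpha) =
  ((fun x => u x * cexp (- ('i * theta%:C * A_g g alpha x))),
   (fun k => alpha k - 'i * theta%:C * g k * Fmod2 u k))%C.
Proof.
have gN k : cabs2 (g (neg3 k)) = cabs2 (g k).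
  by case: hpar => h; rewrite h // cabs2N.
have J0 x : complex.Im (cint (fun k => Fmod2 u k * (cabs2 (g k))%:C
                             * cexp ('i * (dot3 k x)%:C))) = 0.
  apply: Im_conj0.
  rewrite -[in LHS]cint_neg3 -cint_conj; congr cint; apply/funext => k.
  rewrite Fmod2N gN dot3N; exact: (H_conj (Fmod2 u k) (cabs2 (g k)) (dot3 k x)).
rewrite /D_g; congr (_, _); apply/funext => x.
by rewrite J0 mulr0 addr0.
Qed.
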